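(* Let $\Phi$ be an $e$-dimensional formal group law over $k$, $m\in\mathbb N_{>0}\cup\{\infty\}$, and let $(K,\mathbb D)$ be a $\Phi[m]$-field. Then $[K:C_K]\le p^e$.
   Context: $k$ is a field of characteristic $p>0$. For a $k$-algebra $R$, $R[\bar v]:=R[X_1,\dots,X_e]/(X_1^{p^m},\dots,X_e^{p^m})$ ($R[[\bar X]]$ if $m=\infty$); $\bar w$ is a second $e$-tuple of $m$-truncated variables. $\Phi[m]\in(k[\bar v,\bar w])^e$ denotes the image of $\Phi(\bar X,\bar Y)$ under $X_i\mapsto v_i$, $Y_i\mapsto w_i$ ($\Phi[\infty]=\Phi$). An $m$-truncated $e$-dimensional HS-derivation on $R$ over $k$ is a family $(D_{\mathbf i}:R\to R)_{\mathbf i\in\{0,\dots,p^m-1\}^e}$ such that $r\mapsto\sum D_{\mathbf i}(r)\bar v^{\mathbf i}$ is a $k$-algebra homomorphism $R\to R[\bar v]$ with $D_{\mathbf 0}=\mathrm{id}$. For $F\in(k[\bar v,\bar w])^e$ it is an $F$-derivation if $\sum_{\mathbf i,\mathbf j}D_{\mathbf j}(D_{\mathbf i}(r))\bar v^{\mathbf i}\bar w^{\mathbf j}=\sum_{\mathbf i}D_{\mathbf i}(r)F(\bar v,\bar w)^{\mathbf i}$ for all $r$. An $F$-field is a field $K\supseteq k$ with an $F$-derivation $\mathbb D$. The field of constants is $C_K:=\bigcap_{l=1}^e\ker D_{\varepsilon_l}$, $\varepsilon_l$ the $l$-th unit vector. *)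

(* Defs.v *)
(* Multivariate (truncated) power series are modelled by
   their coefficient functions on multi-indices. *)
From HB Require Import structures.
From mathcomp Require Import all_boot all_order all_algebra.
Set Implicit Arguments. Unset Strict Implicit. Unset Printing Implicit Defensive.
Import GRing.Theory.
Local Open Scope ring_scope.

Definition mi (V : finType) := {ffun V -> nat}.
Definition mzero (V : finType) : mi V := [ffun _ => 0%N].
Definition meps (V : finType) (v : V) : mi V := [ffun u => nat_of_bool (u == v)].
Definition mle (V : finType) (b a : mi V) : bool := [forall v, (b v <= a v)%N].
Definition msub (V : finType) (a b : mi V) : mi V := [ffun v => (a v - b v)%N].
Definition mdeg (V : finType) (a : mi V) : nat := (\sum_v a v)%N.
Definition mlift (V : finType) (N : nat) (c : {ffun V -> 'I_N}) : mi V :=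
  [ffun v => nat_of_ord (c v)].

Definition sum_le (R : nmodType) (V : finType) (a : mi V) (F : mi V -> R) : R :=
  \sum_(c : {ffun V -> 'I_(mdeg a).+1} | mle (mlift c) a) F (mlift c).

(* Truncation level: m = Some n means exponents < p^n; m = None means
   untruncated power series (m = infinity). *)
Definition inrange (p : nat) (m : option nat) (V : finType) (a : mi V) : bool :=
  if m is Some n then [forall v, (a v < p ^ n)%N] else true.

Definition ts (V : finType) (R : Type) := mi V -> R.

Definition trunc (R : nmodType) p m (V : finType) (f : ts V R) : ts V R :=
  fun a => if inrange p m a then f a else 0.
Definition tone (R : pzSemiRingType) (V : finType) : ts V R :=
  fun a => if a == mzero V then 1 else 0.
Definition tmul (R : pzSemiRingType) p m (V : finType) (f g : ts V R) : ts V R :=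
  fun a => if inrange p m a then sum_le a (fun b => f b * g (msub a b)) else 0.
Definition tpow (R : pzSemiRingType) p m (V : finType) (f : ts V R) (n : nat)
  : ts V R := iter n (tmul p m f) (@tone R V).
Definition tprodpow (R : pzSemiRingType) p m (V W : finType)
  (F : W -> ts V R) (i : mi W) : ts V R :=
  foldr (fun w acc => tmul p m (tpow p m (F w) (i w)) acc) (@tone R V) (enum W).

Definition svar (R : pzSemiRingType) (V : finType) (v : V) : ts V R :=
  fun a => if a == meps v then 1 else 0.
Definition sren (R : nmodType) (W V : finType) (h : W -> V) (f : ts W R) : ts V R :=
  fun a => if [forall v, (v \notin codom h) ==> (a v == 0%N)]
           then f [ffun w => a (h w)] else 0.
(* f(g_w : w in W), for g_w with zero constant terms (only |i| <= |a| matter) *)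
Definition ssubst (R : pzSemiRingType) (W V : finType) (f : ts W R)
  (g : W -> ts V R) : ts V R :=
  fun a => \sum_(i : {ffun W -> 'I_(mdeg a).+1} | (mdeg (mlift i) <= mdeg a)%N)
             f (mlift i) * tprodpow 0 None g (mlift i) a.

Definition V2 (e : nat) := ('I_e + 'I_e)%type.
Definition V3 (e : nat) := ('I_e + 'I_e + 'I_e)%type.
Definition mpair (e : nat) (a b : mi 'I_e) : mi (V2 e) :=
  [ffun x => match x with inl l => a l | inr l => b l end].
Definition XY3 (e : nat) (w : V2 e) : V3 e :=
  match w with inl j => inl (inl j) | inr j => inl (inr j) end.
Definition YZ3 (e : nat) (w : V2 e) : V3 e :=
  match w with inl j => inl (inr j) | inr j => inr j end.

Definition formal_group_law (k : pzSemiRingType) (e : nat)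
  (Phi : 'I_e -> ts (V2 e) k) : Prop :=
  (forall l a, Phi l (mpair a (mzero _)) = if a == meps l then 1 else 0) /\
  (forall l b, Phi l (mpair (mzero _) b) = if b == meps l then 1 else 0) /\
  (forall l (a : mi (V3 e)),
     ssubst (Phi l) (fun w => match w with
                             | inl j => sren (@XY3 e) (Phi j)
                             | inr j => svar _ (inr j) end) a
   = ssubst (Phi l) (fun w => match w with
                             | inl j => svar _ (inl (inl j))
                             | inr j => sren (@YZ3 e) (Phi j) end) a).

(* m-truncated e-dimensional HS-derivation on K over k (k -> K via iota):
   r |-> sum_i D_i(r) v^i is a k-algebra hom K -> K[v] with D_0 = id. *)
Definition is_HS_derivation (k K : pzRingType) (iota : k -> K) (p : nat)
  (m : option nat) (e : nat) (D : mi 'I_e -> K -> K) : Prop :=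
  (forall r, D (mzero _) r = r) /\
  (forall i, inrange p m i -> forall r s, D i (r + s) = D i r + D i s) /\
  (forall i, inrange p m i -> forall r s,
       D i (r * s) = sum_le i (fun j => D j r * D (msub i j) s)) /\
  (forall i, inrange p m i -> forall c, D i (iota c) = if i == mzero _ then iota c else 0).

(* F-derivation condition with F = Phi[m]:
   sum_{i,j} D_j(D_i r) v^i w^j = sum_i D_i(r) F(v,w)^i, compared coefficientwise
   at v^a w^b.  For m = Some n the right-hand sum is over all i in
   {0..p^n-1}^e; for m = None (power series) the sum is over i with entries
   <= |a|+|b| (the other terms have zero coefficient at v^a w^b, since F has no
   constant term). *)
Definition is_Phi_m_derivation (k K : pzRingType) (iota : k -> K) (p : nat)
  (m : option nat) (e : nat) (Phi : 'I_e -> ts (V2 e) k)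
  (D : mi 'I_e -> K -> K) : Prop :=
  is_HS_derivation iota p m D /\
  forall r (a b : mi 'I_e), inrange p m a -> inrange p m b ->
    D b (D a r) =
    \sum_(i : {ffun 'I_e -> 'I_(if m is Some n then p ^ n else (mdeg a + mdeg b).+1)%N})
       D (mlift i) r *
       iota (tprodpow p m (fun l => trunc p m (Phi l)) (mlift i) (mpair a b)).

Definition constants (K : pzRingType) (e : nat) (D : mi 'I_e -> K -> K) (x : K) : Prop :=
  forall l : 'I_e, D (meps l) x = 0.

(* Main.v *)
Require Import Defs.
From HB Require Import structures.
From mathcomp Require Import all_boot all_order all_algebra.
Set Implicit Arguments. Unset Strict Implicit. Unset Printing Implicit Defensive.
Import GRing.Theory.
Local Open Scope ring_scope.


Section TS.
Variables (R : fieldType) (p : nat) (m : option nat) (V : finType).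

Lemma le_mdeg (a : mi V) v : (a v <= mdeg a)%N.
Proof. by rewrite /mdeg (bigD1 v) //= leq_addr. Qed.

Lemma inrange_le (a b : mi V) : mle b a -> inrange p m a -> inrange p m b.
Proof.
case: m => //= n /forallP hb /forallP ha; apply/forallP => v.
exact: leq_ltn_trans (hb v) (ha v).
Qed.

Lemma mlift_inord N1 N2 (c : {ffun V -> 'I_N1}) : (forall v, c v < N2.+1)%N ->
  mlift ([ffun v => inord (c v)] : {ffun V -> 'I_N2.+1}) = mlift c.
Proof. by move=> h; apply/ffunP => v; rewrite !ffunE inordK. Qed.

Lemma sum_le_gen N (a : mi V) (F : mi V -> R) : (forall v, a v <= N)%N ->
  sum_le a F = \sum_(c : {ffun V -> 'I_N.+1} | mle (mlift c) a) F (mlift c).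
Proof.
move=> hN; rewrite /sum_le.
rewrite (reindex_onto (fun c : {ffun V -> 'I_N.+1} => [ffun v => inord (c v)] : {ffun V -> 'I_(mdeg a).+1})
   (fun c : {ffun V -> 'I_(mdeg a).+1} => [ffun v => inord (c v)] : {ffun V -> 'I_N.+1})); last first.
  move=> c /forallP hc; apply/ffunP => v; rewrite !ffunE; apply/val_inj => /=.
  have h1 : (c v <= a v)%N by have := hc v; rewrite ffunE.
  have e1 : ((inord (c v) : 'I_N.+1) : nat) = c v by rewrite inordK // ltnS (leq_trans h1).
  by rewrite e1 inordK // e1 ltnS (leq_trans h1) // le_mdeg.
apply: eq_big => c.
  apply/idP/idP.
    case/andP => hc0 /eqP he; move/forallP: (hc0) => hc.
    rewrite -he mlift_inord // => v.
    have := hc v; rewrite /mlift !ffunE => h; by rewrite ?ffunE ltnS (leq_trans h).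
  move=> hc; move/forallP: (hc) => hc'.
  have hv : forall v, (c v < (mdeg a).+1)%N.
    move=> v; have := hc' v; rewrite ffunE => h; by rewrite ltnS (leq_trans h) // le_mdeg.
  rewrite mlift_inord // hc /=; apply/eqP/ffunP => v; rewrite !ffunE.
  apply/val_inj => /=; rewrite !inordK //.
case/andP => hc0 /eqP he; move/forallP: (hc0) => hc.
rewrite -{2}he; congr F; symmetry; apply: mlift_inord => v.
have := hc v; rewrite /mlift !ffunE => h; by rewrite ?ffunE ltnS (leq_trans h).
Qed.

Lemma mle_sub (a b : mi V) : mle (msub a b) a.
Proof. by apply/forallP => v; rewrite ffunE leq_subr. Qed.

Lemma msubAC (a b d : mi V) : msub (msub a b) d = msub (msub a d) b.
Proof. by apply/ffunP => v; rewrite !ffunE subnAC. Qed.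

Lemma mle_pair (a b d : mi V) :
  mle b a && mle d (msub a b) = [forall v, b v + d v <= a v]%N.
Proof.
apply/idP/idP.
  case/andP => /forallP h1 /forallP h2; apply/forallP => v.
  by have := h2 v; rewrite ffunE leq_subRL.
move/forallP => h; apply/andP; split; apply/forallP => v; have := h v.
  by apply: leq_trans; rewrite leq_addr.
by rewrite ffunE => hv; rewrite leq_subRL // (leq_trans _ hv) // leq_addr.
Qed.

Lemma dsum_sym N (a : mi V) (F : mi V -> mi V -> R) :
  \sum_(b : {ffun V -> 'I_N} | mle (mlift b) a)
     \sum_(d : {ffun V -> 'I_N} | mle (mlift d) (msub a (mlift b))) F (mlift b) (mlift d) =
  \sum_(d : {ffun V -> 'I_N} | mle (mlift d) a)
     \sum_(b : {ffun V -> 'I_N} | mle (mlift b) (msub a (mlift d))) F (mlift b) (mlift d).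
Proof.
have if_sum : forall (P : bool) (Q : pred {ffun V -> 'I_N}) (X : {ffun V -> 'I_N} -> R),
   (if P then \sum_(d | Q d) X d else 0) = \sum_d (if P && Q d then X d else 0).
  by move=> [] Q X; rewrite ?big_mkcond //= big1.
rewrite big_mkcond [RHS]big_mkcond.
under eq_bigr => b _ do rewrite if_sum.
under [RHS]eq_bigr => d _ do rewrite if_sum.
rewrite exchange_big /=; apply: eq_bigr => d _; apply: eq_bigr => b _.
rewrite mle_pair [in RHS]mle_pair.
congr (if _ then _ else _); apply: eq_forallb => v; by rewrite addnC.
Qed.

Lemma sum_le_ins N (a : mi V) (F : mi V -> mi V -> R) (G : mi V -> R) :
  (forall v, a v <= N)%N -> inrange p m a ->
  (forall b, mle b a -> G b = sum_le (msub a b) (F b)) ->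
  sum_le a G = \sum_(b : {ffun V -> 'I_N.+1} | mle (mlift b) a)
     \sum_(d : {ffun V -> 'I_N.+1} | mle (mlift d) (msub a (mlift b))) F (mlift b) (mlift d).
Proof.
move=> hN ha hG; rewrite (sum_le_gen (N:=N)) //; apply: eq_bigr => b hb.
rewrite hG // (sum_le_gen (N:=N)) // => v; rewrite ffunE.
exact: leq_trans (leq_subr _ _) (hN v).
Qed.

Lemma tmul_lcomm (f g h : ts V R) a :
  tmul p m f (tmul p m g h) a = tmul p m g (tmul p m f h) a.
Proof.
rewrite {1 3}/tmul; case: ifP => // ha.
rewrite (@sum_le_ins (mdeg a) a (fun b d => f b * g d * h (msub (msub a b) d))); first last.
- move=> b hb; rewrite /tmul (inrange_le (mle_sub a b) ha) big_distrr /=.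
  by apply: eq_bigr => c _; rewrite mulrA.
- by [].
- exact: le_mdeg.
rewrite (@sum_le_ins (mdeg a) a (fun d b => g d * f b * h (msub (msub a d) b))); first last.
- move=> b hb; rewrite /tmul (inrange_le (mle_sub a b) ha) big_distrr /=.
  by apply: eq_bigr => c _; rewrite mulrA.
- by [].
- exact: le_mdeg.
rewrite (dsum_sym (mdeg a).+1 a (fun b d => f b * g d * h (msub (msub a b) d))); apply: eq_bigr => d _; apply: eq_bigr => b _.
by rewrite msubAC [f _ * g _]mulrC.
Qed.

Definition Eop (t : V) (f : ts V R) : ts V R := fun a => (a t)%:R * f a.

Lemma tmul_ext (f g g' : ts V R) a : (forall b, g b = g' b) -> tmul p m f g a = tmul p m f g' a.
Proof. by move=> h; rewrite /tmul; case: ifP => // _; apply: eq_bigr => c _; rewrite h. Qed.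

Lemma tmul0 (f g : ts V R) a : (forall b, g b = 0) -> tmul p m f g a = 0.
Proof. by move=> h; rewrite /tmul; case: ifP => // _; rewrite /sum_le big1 // => c _; rewrite h mulr0. Qed.

Lemma tmulZ (f g : ts V R) c a : tmul p m f (fun b => c * g b) a = c * tmul p m f g a.
Proof.
rewrite /tmul; case: ifP => _; last by rewrite mulr0.
by rewrite /sum_le mulr_sumr; apply: eq_bigr => d _; rewrite mulrCA.
Qed.

Lemma E_tmul t (f g : ts V R) a :
  Eop t (tmul p m f g) a = tmul p m (Eop t f) g a + tmul p m f (Eop t g) a.
Proof.
rewrite /Eop /tmul; case: ifP => _; last by rewrite mulr0 addr0.
rewrite /sum_le -big_split mulr_sumr /=; apply: eq_bigr => c /forallP hc.
have := hc t; rewrite [msub _ _ t]ffunE => h.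
have -> : a t = (mlift c t + (a t - mlift c t))%N by rewrite subnKC.
rewrite natrD addKn mulrDl !mulrA.
by rewrite [f _ * _%:R]mulrC.
Qed.


Lemma E_tpow t (g : ts V R) n a :
  Eop t (tpow p m g n.+1) a = n.+1%:R * tmul p m (Eop t g) (tpow p m g n) a.
Proof.
elim: n a => [|n IH] a.
  rewrite /= E_tmul (@tmul0 g) ?addr0 ?mul1r // => b.
  rewrite /Eop /tone; case: eqP => [->|_]; last by rewrite mulr0.
  by rewrite ffunE mul0r.
rewrite [tpow _ _ _ _.+2]/= E_tmul (tmul_ext _ _ IH) tmulZ tmul_lcomm.
by rewrite -(addn1 n.+1) natrD mulrDl mul1r addrC.
Qed.

Definition inS (c : mi V) := [forall v, c v < p]%N.

Lemma inS_le b c : mle b c -> inS c -> inS b.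
Proof. by move=> /forallP h /forallP h'; apply/forallP => v; exact: leq_ltn_trans (h v) (h' v). Qed.

Lemma vanish_r (f h : ts V R) : (forall c, inS c -> h c = 0) -> forall c, inS c -> tmul p m f h c = 0.
Proof.
move=> hh c hc; rewrite /tmul; case: ifP => // _; rewrite /sum_le big1 // => b hb.
by rewrite hh ?mulr0 // (inS_le (mle_sub _ _) hc).
Qed.

Lemma vanish_l (f h : ts V R) : (forall c, inS c -> f c = 0) -> forall c, inS c -> tmul p m f h c = 0.
Proof.
move=> hh c hc; rewrite /tmul; case: ifP => // _; rewrite /sum_le big1 // => b hb.
by rewrite hh ?mul0r // (inS_le hb hc).
Qed.

Lemma tpow_p_vanish (g : ts V R) : p \in [pchar R] -> g (mzero V) = 0 ->
  forall c, inS c -> tpow p m g p c = 0.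
Proof.
move=> hp g0 c hc.
have pp := pcharf_prime hp.
have hp1 : p = p.-1.+1 by rewrite prednK // prime_gt0.
case: (boolP [exists t, c t != 0%N]) => [/existsP [t ht]|].
  have := E_tpow t g p.-1 c; rewrite -hp1 (pcharf0 hp) mul0r /Eop => /eqP.
  rewrite mulf_eq0 => /orP [|/eqP //].
  rewrite -(dvdn_pcharf hp) gtnNdvd //; first by rewrite lt0n.
  by move/forallP: hc; apply.
rewrite negb_exists => /forallP hc0.
rewrite hp1 /= /tmul; case: ifP => // _; rewrite /sum_le big1 // => b /forallP hb.
have -> : mlift b = mzero V.
  apply/ffunP => v; rewrite [RHS]ffunE; apply/eqP; rewrite -leqn0.
  by have := hb v; have := hc0 v; rewrite negbK => /eqP ->.
by rewrite g0 mul0r.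
Qed.

Lemma tpow_ge_vanish (g : ts V R) n : p \in [pchar R] -> g (mzero V) = 0 -> (p <= n)%N ->
  forall c, inS c -> tpow p m g n c = 0.
Proof.
move=> hp g0; elim: n => [|n IH] hn.
  by have := prime_gt0 (pcharf_prime hp); rewrite leqNgt ltnS leqn0 => /negP; rewrite -leqn0.
case: (ltngtP p n.+1) hn => // [h|<-] _; last exact: tpow_p_vanish.
by apply: vanish_r; apply: IH.
Qed.

Variable W : finType.
Lemma tprodpow_vanish (F : W -> ts V R) (i : mi W) w0 : p \in [pchar R] -> (p <= i w0)%N ->
  (forall w, F w (mzero V) = 0) -> forall c, inS c -> tprodpow p m F i c = 0.
Proof.
move=> hp hi hF; rewrite /tprodpow.
have : w0 \in enum W by rewrite mem_enum.
elim: (enum W) => //= w s IH; rewrite in_cons => /orP [/eqP hw|hs]; first subst w0.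
  by apply: vanish_l; apply: tpow_ge_vanish.
by apply: vanish_r; apply: IH.
Qed.
End TS.

Lemma sum_le_eps (R : fieldType) (V : finType) (l : V) (F : mi V -> R) :
  sum_le (meps l) F = F (mzero V) + F (meps l).
Proof.
have hb : forall v, (meps l v <= 1)%N by move=> v; rewrite ffunE leq_b1.
rewrite (sum_le_gen (N:=1)) //.
pose c0 : {ffun V -> 'I_2} := [ffun _ => ord0].
pose c1 : {ffun V -> 'I_2} := [ffun v => if v == l then ord_max else ord0].
have m0 : mlift c0 = mzero V by apply/ffunP => v; rewrite !ffunE.
have m1 : mlift c1 = meps l by apply/ffunP => v; rewrite !ffunE; case: (v == l).
have c01 : c1 != c0.
  by apply/eqP => /ffunP /(_ l); rewrite !ffunE eqxx => /(congr1 val).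
rewrite (bigD1 c0) /=; last by rewrite m0; apply/forallP => v; rewrite ffunE.
rewrite (bigD1 c1) /=; last by rewrite m1 c01 andbT; apply/forallP => v.
rewrite big1 ?addr0 ?m0 ?m1 // => c /andP [/andP [/forallP hle hc0] hc1].
have hv : forall v, v != l -> c v = ord0.
  move=> v hvl; apply/val_inj => /=; apply/eqP; rewrite -leqn0.
  by have := hle v; rewrite !ffunE (negbTE hvl).
case: (c l =P ord0) => hl.
  by case/eqP: hc0; apply/ffunP => v; rewrite ffunE; case: (v =P l) => [->|/eqP]//; exact: hv.
case/eqP: hc1; apply/ffunP => v; rewrite ffunE; case: (v =P l) => [->|/eqP hvl]; last exact: hv.
apply/val_inj => /=.
by move: hl; case: (c l) => [[|[|//]] ?] //= hl; case: hl; apply: val_inj.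
Qed.

Unset Implicit Arguments.

Theorem lemma2p19 (k K : fieldType) (p : nat) (hp : p \in [pchar k])
  (iota : {rmorphism k -> K}) (e : nat) (Phi : 'I_e -> ts (V2 e) k)
  (hPhi : formal_group_law Phi) (m : option nat) (hm : m <> Some 0%N)
  (D : mi 'I_e -> K -> K) (hD : is_Phi_m_derivation iota p m Phi D) :
  forall (n : nat) (x : 'I_n -> K),
    (forall c : 'I_n -> K, (forall j, constants D (c j)) ->
       \sum_(j < n) c j * x j = 0 -> forall j, c j = 0) ->
    (n <= p ^ e)%N.
Proof.
move=> n x H.
have pp := pcharf_prime hp.
have p2 : (1 < p)%N := prime_gt1 pp.
case: hD => [[D0 [Dadd [Dmul Diota]]] DF].
have inR : forall a : mi 'I_e, inS p a -> inrange p m a.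
  move=> a /forallP ha; rewrite /inrange; case Em: m => [n0|] //; apply/forallP => v.
  have hn0 : n0 <> 0%N by move=> h; apply: hm; rewrite Em h.
  apply: leq_trans (ha v) _; rewrite -{1}(expn1 p) leq_pexp2l ?(prime_gt0 pp) //.
  by rewrite lt0n; apply/eqP.
have inSe : forall l : 'I_e, inS p (meps l).
  by move=> l; apply/forallP => v; rewrite ffunE (leq_ltn_trans (leq_b1 _) p2).
have Dz : forall l, D (meps l) 0 = 0.
  move=> l; have := Dadd _ (inR _ (inSe l)) 0 0; rewrite addr0.
  by move/(congr1 (fun y => y - D (meps l) 0)); rewrite subrr addrK.
have Dprod : forall l r s, D (meps l) (r * s) = r * D (meps l) s + D (meps l) r * s.
  move=> l r s; rewrite Dmul ?inR // sum_le_eps D0.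
  have -> : msub (meps l) (mzero _) = meps l by apply/ffunP => v; rewrite !ffunE subn0.
  have -> : msub (meps l) (meps l) = mzero _ by apply/ffunP => v; rewrite !ffunE subnn.
  by rewrite D0.
have meps0 : forall l : 'I_e, (meps l == mzero _) = false.
  by move=> l; apply/negP => /eqP /ffunP /(_ l); rewrite !ffunE eqxx.
have D1 : forall l, D (meps l) 1 = 0.
  by move=> l; have := Diota _ (inR _ (inSe l)) 1; rewrite rmorph1 meps0.
pose kerP (c : 'I_n -> K) := forall a, inS p a -> \sum_(j < n) c j * D a (x j) = 0.
have Dsum : forall l (F : 'I_n -> K), D (meps l) (\sum_(j < n) F j) = \sum_(j < n) D (meps l) (F j).
  move=> l F; exact: (big_morph _ (Dadd _ (inR _ (inSe l))) (Dz l)).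
have Phi0 : forall w, trunc p m (Phi w) (mzero (V2 e)) = 0.
  move=> w; rewrite /trunc; case: ifP => // _.
  have -> : mzero (V2 e) = mpair (mzero _) (mzero _) by apply/ffunP => -[v|v]; rewrite !ffunE.
  by rewrite hPhi.1 eq_sym meps0.
have clos : forall c l, kerP c -> kerP (fun j => D (meps l) (c j)).
  move=> c l hc a ha.
  have hR := inR _ ha; have hRe := inR _ (inSe l).
  have : D (meps l) (\sum_(j < n) c j * D a (x j)) = 0 by rewrite hc // Dz.
  rewrite Dsum; under eq_bigr => j _ do rewrite Dprod.
  rewrite big_split /=.
  suff -> : \sum_(j < n) c j * D (meps l) (D a (x j)) = 0 by rewrite add0r.
  under eq_bigr => j _ do rewrite (DF _ _ _ hR hRe) big_distrr.
  rewrite exchange_big big1 //= => i _.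
  under eq_bigr => j _ do rewrite mulrA mulrC.
  rewrite -big_distrr /=.
  case: (boolP (inS p (mlift i))) => hi; first by rewrite hc // mulr0.
  move: hi; rewrite /inS negb_forall => /existsP [w0]; rewrite -leqNgt => hw0.
  rewrite (tprodpow_vanish m hp hw0 Phi0) ?rmorph0 ?mul0r //.
  apply/forallP => -[v|v]; rewrite ffunE; first exact: (forallP ha v).
  by rewrite ffunE (leq_ltn_trans (leq_b1 _) p2).
have inS0 : inS p (mzero 'I_e) by apply/forallP => v; rewrite ffunE prime_gt0.
have key : forall s (c : 'I_n -> K), (#|[pred j | c j != 0%R]| <= s)%N -> kerP c -> forall j, c j = 0.
  elim=> [|s IHs] c hs hc j.
    move: hs; rewrite leqn0 => /eqP /card0_eq /(_ j) /=.
    by rewrite !inE => /negbFE /eqP.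
  case: (eqVneq (c j) 0) => // hj; exfalso.
  pose c' := fun i => c i / c j.
  have hc' : kerP c'.
    move=> a ha; rewrite /c'.
    under eq_bigr => i _ do rewrite mulrAC.
    by rewrite -mulr_suml hc // mul0r.
  have hcj : c' j = 1 by rewrite /c' divff.
  have supp : forall i, (c' i != 0) = (c i != 0).
    by move=> i; rewrite /c' mulf_eq0 invr_eq0 (negbTE hj) orbF.
  have dz : forall l i, D (meps l) (c' i) = 0.
    move=> l; apply: (IHs _ _ (clos _ _ hc')).
    rewrite -ltnS (leq_trans _ hs) //.
    apply: (@leq_trans #|[pred i | c' i != 0]|); last first.
      by rewrite leq_eqVlt; apply/orP; left; apply/eqP; apply: eq_card => i; rewrite !inE supp.
    apply: proper_card; apply/properP; split.
      apply/subsetP => i; rewrite !inE; apply: contraNneq => ->.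
      by rewrite Dz.
    by exists j; rewrite !inE ?hcj ?oner_eq0 // D1 eqxx.
  have := H c' (fun i l => dz l i).
  have := hc' _ inS0; under eq_bigr => i _ do rewrite D0.
  by move=> h /(_ h j); rewrite hcj => /eqP; rewrite oner_eq0.
rewrite leqNgt; apply/negP => hn.
pose T := {ffun 'I_e -> 'I_p}.
pose M : 'M[K]_(n, #|{: T}|) := \matrix_(i, q) D (mlift (enum_val q)) (x i).
have hrow : ~~ row_free M.
  rewrite /row_free; apply/negP => /eqP hr.
  have := rank_leq_col M; rewrite hr card_ffun !card_ord => h.
  by move: hn; rewrite ltnNge h.
move: hrow; rewrite -kermx_eq0 => /eqP hK.
have [i0 [j0 hij]] : exists i0 j0, kermx M i0 j0 != 0.
  case: (pickP [pred ij : 'I_n * 'I_n | kermx M ij.1 ij.2 != 0]) => [[i0 j0] /= hij|h0].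
    by exists i0, j0.
  exfalso; apply: hK; apply/matrixP => i j; rewrite [RHS]mxE.
  by have := h0 (i, j); rewrite /= => /negbFE /eqP.
have hc : kerP (fun j => kermx M i0 j).
  move=> a ha; have ha' : forall v, (a v < p)%N := elimT forallP ha.
  pose t : T := [ffun v => Ordinal (ha' v)].
  have mt : mlift t = a by apply/ffunP => v; rewrite !ffunE.
  have h := mulmx_ker M; move/matrixP/(_ i0 (enum_rank t)): h; rewrite [LHS]mxE [RHS]mxE /= => h.
  rewrite -[RHS]h; apply: eq_bigr => j _; by rewrite [M _ _]mxE enum_rankK mt.
by move: hij; rewrite (key _ _ (leqnn _) hc j0) eqxx.
Qed.
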